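(* If a typing environment $\Gamma$ is live and $\Gamma\to\Gamma'$, then $\Gamma'$ is live.
   Context: Sorts: $\mathsf{S} ::= \mathtt{nat} \mid \mathtt{int} \mid \mathtt{bool} \mid \mathtt{unit}$; subsorting $\leq:$ is the least reflexive relation on sorts with $\mathtt{nat}\leq:\mathtt{int}$. Session types: $\mathbb{T} ::= \&_{i\in I}\mathsf{p}?\ell_i(\mathsf{S}_i).\mathbb{T}_i \mid \oplus_{i\in I}\mathsf{p}!\ell_i(\mathsf{S}_i).\mathbb{T}_i \mid \mathtt{end} \mid \mu\mathbf{t}.\mathbb{T} \mid \mathbf{t}$ ($I$ finite nonempty, distinct labels, guarded recursion, closed types); $\equiv$ on types is the least congruence with $\mu\mathbf{t}.\mathbb{T}\equiv\mathbb{T}\{\mu\mathbf{t}.\mathbb{T}/\mathbf{t}\}$. Queue types $\sigma ::= \epsilon \mid \mathsf{p}!\ell(\mathsf{S}) \mid \sigma\cdot\sigma$, with $\equiv$ the least congruence making $\cdot$ associative with unit $\epsilon$ and swapping adjacent messages $\mathsf{p}_1!\ell_1(\mathsf{S}_1)\cdot\mathsf{p}_2!\ell_2(\mathsf{S}_2)$ when $\mathsf{p}_1\neq\mathsf{p}_2$. A typing environment $\Gamma$ is a finite map from participants to pairs $(\sigma,\mathbb{T})$. $(\sigma_1,\mathbb{T}_1)\equiv(\sigma_2,\mathbb{T}_2)$ iff both components are $\equiv$; $\Gamma\equiv\Gamma'$ iff entries of common participants are $\equiv$ and entries of participants in only one domain are $\equiv(\epsilon,\mathtt{end})$. Reductions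 $\Gamma\xrightarrow{\alpha}\Gamma'$: (e-rcv) $\mathsf{p}{:}(\mathsf{q}!\ell_k(\mathsf{S}'_k)\cdot\sigma,\mathbb{T}_\mathsf{p}),\mathsf{q}{:}(\sigma_\mathsf{q},\&_{i\in I}\mathsf{p}?\ell_i(\mathsf{S}_i).\mathbb{T}_i),\Gamma\xrightarrow{\mathsf{q}:\mathsf{p}?\ell_k}\mathsf{p}{:}(\sigma,\mathbb{T}_\mathsf{p}),\mathsf{q}{:}(\sigma_\mathsf{q},\mathbb{T}_k),\Gamma$ if $k\in I$ and $\mathsf{S}'_k\leq:\mathsf{S}_k$; (e-send) $\mathsf{p}{:}(\sigma,\oplus_{i\in I}\mathsf{q}!\ell_i(\mathsf{S}_i).\mathbb{T}_i),\Gamma\xrightarrow{\mathsf{p}:\mathsf{q}!\ell_k}\mathsf{p}{:}(\sigma\cdot\mathsf{q}!\ell_k(\mathsf{S}_k),\mathbb{T}_k),\Gamma$ if $k\in I$; (e-struct) $\Gamma\equiv\Gamma_1\xrightarrow{\alpha}\Gamma_1'\equiv\Gamma'$ implies $\Gamma\xrightarrow{\alpha}\Gamma'$. $\Gamma\to\Gamma'$ means $\Gamma\xrightarrow{\alpha}\Gamma'$ for some $\alpha$. A path is a finite or infinite sequence $(\Gamma_i)_{i\in I}$ ($I=\{0,1,\dots\}$ consecutive naturals) with $\Gamma_i\to\Gamma_{i+1}$ whenever $i+1\in I$. Fair: for all $i\in I$, (F1) if $\Gamma_i\xrightarrow{\mathsf{p}:\mathsf{q}!\ell}\Gamma'$ for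 some $\Gamma'$ then $\Gamma_k\xrightarrow{\mathsf{p}:\mathsf{q}!\ell'}\Gamma_{k+1}$ for some $k\geq i$ with $k+1\in I$ and some $\ell'$; (F2) if $\Gamma_i\xrightarrow{\mathsf{p}:\mathsf{q}?\ell}\Gamma'$ for some $\Gamma'$ then $\Gamma_k\xrightarrow{\mathsf{p}:\mathsf{q}?\ell}\Gamma_{k+1}$ for some $k\geq i$ with $k+1\in I$. Live: for all $i\in I$, (L1) if $\Gamma_i(\mathsf{p})\equiv(\mathsf{q}!\ell(\mathsf{S})\cdot\sigma,\mathbb{T})$ then $\Gamma_k\xrightarrow{\mathsf{q}:\mathsf{p}?\ell}\Gamma_{k+1}$ for some $k\geq i$ with $k+1\in I$; (L2) if $\Gamma_i(\mathsf{p})\equiv(\sigma_\mathsf{p},\&_{j\in J}\mathsf{q}?\ell_j(\mathsf{S}_j).\mathbb{T}_j)$ then $\Gamma_k\xrightarrow{\mathsf{p}:\mathsf{q}?\ell'}\Gamma_{k+1}$ for some $k\geq i$ with $k+1\in I$ and some $\ell'$. $\Gamma$ is live iff every fair path with $\Gamma_0=\Gamma$ is live. *)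

(* Defs.v *)
From Stdlib Require Import List Arith.
Import ListNotations.

Inductive sort : Type := SNat | SInt | SBool | SUnit.

Inductive subsort : sort -> sort -> Prop :=
| subsort_refl s : subsort s s
| subsort_nat_int : subsort SNat SInt.

(** Session types, recursion variables as de Bruijn indices.
    TBra p bs = &_{i} p?l_i(S_i).T_i ; TSel p bs = (+)_{i} p!l_i(S_i).T_i *)
Inductive stype : Type :=
| TBra (p : nat) (bs : list (nat * sort * stype))
| TSel (p : nat) (bs : list (nat * sort * stype))
| TEnd
| TRec (T : stype)
| TVar (n : nat).

Fixpoint lift (c : nat) (T : stype) : stype :=
  match T with
  | TBra p bs =>
      TBra p ((fix go (bs : list (nat * sort * stype)) :=
                 match bs with
                 | [] => []
                 | (l, s, U) :: bs' => (l, s, lift c U) :: go bs'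
                 end) bs)
  | TSel p bs =>
      TSel p ((fix go (bs : list (nat * sort * stype)) :=
                 match bs with
                 | [] => []
                 | (l, s, U) :: bs' => (l, s, lift c U) :: go bs'
                 end) bs)
  | TEnd => TEnd
  | TRec U => TRec (lift (S c) U)
  | TVar n => if Nat.ltb n c then TVar n else TVar (S n)
  end.

Fixpoint subst (k : nat) (U : stype) (T : stype) : stype :=
  match T with
  | TBra p bs =>
      TBra p ((fix go (bs : list (nat * sort * stype)) :=
                 match bs with
                 | [] => []
                 | (l, s, V) :: bs' => (l, s, subst k U V) :: go bs'
                 end) bs)
  | TSel p bs =>
      TSel p ((fix go (bs : list (nat * sort * stype)) :=
                 match bs with
                 | [] => []
                 | (l, s, V) :: bs' => (l, s, subst k U V) :: go bs'
                 end) bs)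
  | TEnd => TEnd
  | TRec V => TRec (subst (S k) (lift 0 U) V)
  | TVar n =>
      if Nat.eqb n k then U
      else if Nat.ltb k n then TVar (pred n) else TVar n
  end.

Fixpoint closed_at (k : nat) (T : stype) : Prop :=
  match T with
  | TBra _ bs | TSel _ bs =>
      (fix go (bs : list (nat * sort * stype)) :=
         match bs with
         | [] => True
         | (_, _, U) :: bs' => closed_at k U /\ go bs'
         end) bs
  | TEnd => True
  | TRec U => closed_at (S k) U
  | TVar n => n < k
  end.

Fixpoint mu_var (T : stype) : Prop :=
  match T with
  | TVar _ => True
  | TRec U => mu_var U
  | _ => False
  end.

Fixpoint guarded (T : stype) : Prop :=
  match T with
  | TBra _ bs | TSel _ bs =>
      (fix go (bs : list (nat * sort * stype)) :=
         match bs with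
         | [] => True
         | (_, _, U) :: bs' => guarded U /\ go bs'
         end) bs
  | TEnd => True
  | TRec U => ~ mu_var U /\ guarded U
  | TVar _ => True
  end.

Fixpoint branches_ok (T : stype) : Prop :=
  match T with
  | TBra _ bs | TSel _ bs =>
      bs <> [] /\ NoDup (map (fun b => fst (fst b)) bs) /\
      (fix go (bs : list (nat * sort * stype)) :=
         match bs with
         | [] => True
         | (_, _, U) :: bs' => branches_ok U /\ go bs'
         end) bs
  | TEnd => True
  | TRec U => branches_ok U
  | TVar _ => True
  end.

Definition wf_type (T : stype) : Prop :=
  closed_at 0 T /\ guarded T /\ branches_ok T.

Inductive teq : stype -> stype -> Prop :=
| teq_refl T : teq T T
| teq_sym T U : teq T U -> teq U T
| teq_trans T U V : teq T U -> teq U V -> teq T V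
| teq_unfold T : teq (TRec T) (subst 0 (TRec T) T)
| teq_rec T U : teq T U -> teq (TRec T) (TRec U)
| teq_bra p b1 b2 l s T U :
    teq T U -> teq (TBra p (b1 ++ (l, s, T) :: b2)) (TBra p (b1 ++ (l, s, U) :: b2))
| teq_sel p b1 b2 l s T U :
    teq T U -> teq (TSel p (b1 ++ (l, s, T) :: b2)) (TSel p (b1 ++ (l, s, U) :: b2)).

(** Queue types: sequences of messages (receiver, label, sort) = q!l(S);
    lists quotient associativity and unit of (.) with epsilon = []. *)
Definition msg : Type := (nat * nat * sort)%type.
Definition queue : Type := list msg.

Inductive qeq : queue -> queue -> Prop :=
| qeq_refl s : qeq s s
| qeq_sym s t : qeq s t -> qeq t s
| qeq_trans s t u : qeq s t -> qeq t u -> qeq s u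
| qeq_swap s1 s2 q1 l1 S1 q2 l2 S2 :
    q1 <> q2 ->
    qeq (s1 ++ (q1, l1, S1) :: (q2, l2, S2) :: s2)
        (s1 ++ (q2, l2, S2) :: (q1, l1, S1) :: s2).

Definition entry : Type := (queue * stype)%type.

Definition eeq (e e' : entry) : Prop := qeq (fst e) (fst e') /\ teq (snd e) (snd e').

Record env : Type := mkEnv {
  efun : nat -> option entry;
  efin : exists l : list nat, forall p, efun p <> None -> In p l;
  ewf : forall p e, efun p = Some e -> wf_type (snd e)
}.

Definition env_eq (G G' : env) : Prop :=
  forall p,
    match efun G p, efun G' p with
    | Some e, Some e' => eeq e e'
    | Some e, None => eeq e ([], TEnd)
    | None, Some e' => eeq e' ([], TEnd)
    | None, None => True
    end.

(** Transition labels: LRcv p q l is p:q?l ; LSnd p q l is p:q!l *)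
Inductive lab : Type :=
| LRcv (p q l : nat)
| LSnd (p q l : nat).

Inductive red : env -> lab -> env -> Prop :=
| red_rcv (G G' : env) (p q l : nat) (S' Sk : sort) (sg sgq : queue)
          (Tp Tk : stype) (bs : list (nat * sort * stype)) :
    p <> q ->
    efun G p = Some ((q, l, S') :: sg, Tp) ->
    efun G q = Some (sgq, TBra p bs) ->
    In (l, Sk, Tk) bs ->
    subsort S' Sk ->
    efun G' p = Some (sg, Tp) ->
    efun G' q = Some (sgq, Tk) ->
    (forall r, r <> p -> r <> q -> efun G' r = efun G r) ->
    red G (LRcv q p l) G'
| red_send (G G' : env) (p q l : nat) (Sk : sort) (sg : queue)
           (Tk : stype) (bs : list (nat * sort * stype)) :
    efun G p = Some (sg, TSel q bs) ->
    In (l, Sk, Tk) bs ->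
    efun G' p = Some (sg ++ [(q, l, Sk)], Tk) ->
    (forall r, r <> p -> efun G' r = efun G r) ->
    red G (LSnd p q l) G'
| red_struct (G G1 G1' G' : env) (a : lab) :
    env_eq G G1 -> red G1 a G1' -> env_eq G1' G' -> red G a G'.

Definition step (G G' : env) : Prop := exists a, red G a G'.

(** Paths: g indexed by I = {0,...,n-1} (len = Some n) or I = N (len = None). *)
Definition inI (len : option nat) (i : nat) : Prop :=
  match len with None => True | Some n => i < n end.

Definition is_path (g : nat -> env) (len : option nat) : Prop :=
  forall i, inI len (S i) -> step (g i) (g (S i)).

Definition fair (g : nat -> env) (len : option nat) : Prop :=
  forall i, inI len i ->
    (forall p q l G', red (g i) (LSnd p q l) G' ->
       exists k l', i <= k /\ inI len (S k) /\ red (g k) (LSnd p q l') (g (S k))) /\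
    (forall p q l G', red (g i) (LRcv p q l) G' ->
       exists k, i <= k /\ inI len (S k) /\ red (g k) (LRcv p q l) (g (S k))).

Definition live_path (g : nat -> env) (len : option nat) : Prop :=
  forall i, inI len i ->
    (forall p q l (s : sort) (sg : queue) (T : stype) e,
       efun (g i) p = Some e -> eeq e ((q, l, s) :: sg, T) ->
       exists k, i <= k /\ inI len (S k) /\ red (g k) (LRcv q p l) (g (S k))) /\
    (forall p q (sg : queue) (bs : list (nat * sort * stype)) e,
       efun (g i) p = Some e -> eeq e (sg, TBra q bs) ->
       exists k l', i <= k /\ inI len (S k) /\ red (g k) (LRcv p q l') (g (S k))).

Definition live (G : env) : Prop :=
  forall (g : nat -> env) (len : option nat),
    inI len 0 -> (forall p, efun (g 0) p = efun G p) ->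
    is_path g len -> fair g len -> live_path g len.

(* Main.v *)
Require Import Defs.
From Stdlib Require Import List Arith Lia.
Import ListNotations.

Inductive hd_t := HBra (p : nat) | HSel (p : nat) | HEnd | HBot.

Definition scons (x : hd_t) (r : nat -> hd_t) (n : nat) : hd_t :=
  match n with 0 => x | S n => r n end.

Fixpoint hd (T : stype) (r : nat -> hd_t) : hd_t :=
  match T with
  | TBra p _ => HBra p
  | TSel p _ => HSel p
  | TEnd => HEnd
  | TRec U => hd U (scons HBot r)
  | TVar n => r n
  end.

Lemma hd_ext T : forall r r', (forall n, r n = r' n) -> hd T r = hd T r'.
Proof.
  induction T; intros r r' H; simpl; auto.
  apply IHT. intros [|n]; simpl; auto.
Qed.

Lemma hd_lift U : forall c r,
  hd (lift c U) r = hd U (fun n => if Nat.ltb n c then r n else r (S n)).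
Proof.
  induction U; intros c r; simpl; auto.
  - rewrite IHU. apply hd_ext. intros [|n]; simpl; auto.
    all: try (destruct (Nat.ltb n c); reflexivity).
  - destruct (Nat.ltb n c); reflexivity.
Qed.

Lemma hd_subst T : forall k U r,
  hd (subst k U T) r =
  hd T (fun n => if Nat.eqb n k then hd U r
                 else if Nat.ltb k n then r (pred n) else r n).
Proof.
  induction T; intros k U r; simpl; auto.
  - rewrite IHT. apply hd_ext. intros [|m]; simpl.
    + reflexivity.
    + assert (L : hd (lift 0 U) (scons HBot r) = hd U r).
      { rewrite hd_lift. apply hd_ext. intros n; reflexivity. }
      rewrite L. cbv [scons].
      destruct (Nat.eqb_spec m k); [reflexivity|].
      change (S k <? S m) with (k <? m).
      destruct (Nat.ltb_spec k m); destruct m; simpl; auto; lia.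
  - destruct (Nat.eqb n k); auto. destruct (Nat.ltb k n); auto.
Qed.

Lemma hd_dich T : (exists c, forall r, hd T r = c) \/ (exists n, forall r, hd T r = r n).
Proof.
  induction T; simpl.
  - left; eauto.
  - left; eauto.
  - left; eauto.
  - destruct IHT as [[c Hc]|[[|n] Hn]].
    + left; exists c; intros; auto.
    + left; exists HBot; intros r; rewrite Hn; reflexivity.
    + right; exists n; intros r; rewrite Hn; reflexivity.
  - right; eauto.
Qed.

Lemma hd_unfold T r : hd (subst 0 (TRec T) T) r = hd (TRec T) r.
Proof.
  rewrite hd_subst. simpl.
  destruct (hd_dich T) as [[c Hc]|[[|n] Hn]].
  - rewrite !Hc; auto.
  - rewrite !Hn; simpl. reflexivity.
  - rewrite !Hn; simpl. reflexivity.
Qed.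

Lemma teq_hd T U : teq T U -> forall r, hd T r = hd U r.
Proof.
  induction 1; intros r; simpl; auto.
  - rewrite IHteq1; auto.
  - symmetry; apply hd_unfold.
Qed.

Definition filt (r : nat) (s : queue) : queue :=
  filter (fun m => Nat.eqb (fst (fst m)) r) s.

Lemma qeq_filt s t : qeq s t -> forall r, filt r s = filt r t.
Proof.
  induction 1; intros r; auto.
  - rewrite IHqeq1; auto.
  - unfold filt. rewrite !filter_app. f_equal. simpl.
    destruct (Nat.eqb_spec q1 r), (Nat.eqb_spec q2 r); auto. subst; congruence.
Qed.

Lemma qeq_cons x s t : qeq s t -> qeq (x :: s) (x :: t).
Proof.
  induction 1.
  - apply qeq_refl.
  - apply qeq_sym; auto.
  - eapply qeq_trans; eauto.
  - apply (qeq_swap (x :: s1)); auto.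
Qed.

Lemma qeq_app s t u : qeq s t -> qeq (s ++ u) (t ++ u).
Proof.
  induction 1.
  - apply qeq_refl.
  - apply qeq_sym; auto.
  - eapply qeq_trans; eauto.
  - rewrite <- !app_assoc. simpl. apply qeq_swap; auto.
Qed.

Lemma front q l S s f : filt q s = (q, l, S) :: f -> exists sg, qeq s ((q, l, S) :: sg).
Proof.
  revert f; induction s as [|[[q0 l0] S0] s IH]; intros f H; simpl in H.
  - discriminate.
  - unfold filt in H; simpl in H. destruct (Nat.eqb_spec q0 q).
    + injection H; intros; subst. exists s. apply qeq_refl.
    + destruct (IH f H) as [sg Hsg]. exists ((q0, l0, S0) :: sg).
      eapply qeq_trans. apply qeq_cons. exact Hsg.
      apply (qeq_swap [] sg q0 l0 S0 q l S); auto.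
Qed.

Definition Q (G : env) p : queue :=
  match efun G p with Some e => fst e | None => [] end.
Definition Ty (G : env) p : stype :=
  match efun G p with Some e => snd e | None => TEnd end.

Definition envr (G H : env) : Prop :=
  forall p, qeq (Q G p) (Q H p) /\ teq (Ty G p) (Ty H p).

Lemma env_eq_envr G H : env_eq G H -> envr G H.
Proof.
  unfold env_eq, envr, Q, Ty, eeq; intros E p. specialize (E p).
  destruct (efun G p), (efun H p); simpl in *;
  try (split; constructor; fail); try (destruct E; split; auto; fail);
  try (destruct E; split; [apply qeq_sym|apply teq_sym]; auto; fail); tauto.
Qed.

Lemma envr_env_eq G H : envr G H -> env_eq G H.
Proof.
  unfold env_eq, envr, Q, Ty, eeq; intros E p. specialize (E p).
  destruct (efun G p), (efun H p); simpl in *;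
  try (split; constructor; fail); try (destruct E; split; auto; fail);
  try (destruct E; split; [apply qeq_sym|apply teq_sym]; auto; fail); tauto.
Qed.

Lemma envr_refl G : envr G G.
Proof. intros p; split; constructor. Qed.

Lemma wf_Ty G p : wf_type (Ty G p).
Proof.
  unfold Ty. destruct (efun G p) eqn:E.
  - eapply ewf; eauto.
  - unfold wf_type; simpl; auto.
Qed.

Lemma wf_branch_bra p bs l s T : wf_type (TBra p bs) -> In (l, s, T) bs -> wf_type T.
Proof.
  unfold wf_type; simpl. intros [Hc [Hg [_ [_ Hb]]]] Hin.
  induction bs as [|[[l' s'] T'] bs IH]; simpl in *; [contradiction|].
  destruct Hc, Hg, Hb. destruct Hin as [E|E].
  - injection E; intros; subst; auto.
  - auto.
Qed.

Lemma wf_branch_sel p bs l s T : wf_type (TSel p bs) -> In (l, s, T) bs -> wf_type T.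
Proof.
  unfold wf_type; simpl. intros [Hc [Hg [_ [_ Hb]]]] Hin.
  induction bs as [|[[l' s'] T'] bs IH]; simpl in *; [contradiction|].
  destruct Hc, Hg, Hb. destruct Hin as [E|E].
  - injection E; intros; subst; auto.
  - auto.
Qed.

Definition upd (G : env) (p : nat) (e : entry) (H : wf_type (snd e)) : env.
Proof.
  refine (mkEnv (fun r => if Nat.eqb r p then Some e else efun G r) _ _).
  - destruct (efin G) as [l Hl]. exists (p :: l). intros r Hr.
    destruct (Nat.eqb_spec r p); [left; auto | right; auto].
  - intros r e' Hr. destruct (Nat.eqb r p).
    + injection Hr; intros; subst; auto.
    + eapply ewf; eauto.
Defined.

Lemma upd_same G p e H : efun (upd G p e H) p = Some e.
Proof. simpl. rewrite Nat.eqb_refl. auto. Qed.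
Lemma upd_other G p e H r : r <> p -> efun (upd G p e H) r = efun G r.
Proof. simpl. intros. destruct (Nat.eqb_spec r p); congruence. Qed.

Ltac splits := repeat match goal with |- _ /\ _ => split end.
Definition same (G G' : env) r := qeq (Q G' r) (Q G r) /\ teq (Ty G' r) (Ty G r).

Definition red_spec (G : env) (a : lab) (G' : env) : Prop :=
  match a with
  | LSnd p q l => exists bs Sk Tk,
      teq (Ty G p) (TSel q bs) /\ wf_type (TSel q bs) /\ In (l, Sk, Tk) bs /\
      qeq (Q G' p) (Q G p ++ [(q, l, Sk)]) /\ teq (Ty G' p) Tk /\
      (forall r, r <> p -> same G G' r)
  | LRcv q p l => p <> q /\ exists S' Sk sg bs Tk,
      qeq (Q G p) ((q, l, S') :: sg) /\ teq (Ty G q) (TBra p bs) /\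
      wf_type (TBra p bs) /\ In (l, Sk, Tk) bs /\ subsort S' Sk /\
      qeq (Q G' p) sg /\ teq (Ty G' p) (Ty G p) /\
      qeq (Q G' q) (Q G q) /\ teq (Ty G' q) Tk /\
      (forall r, r <> p -> r <> q -> same G G' r)
  end.

Lemma red_inv G a G' : red G a G' -> red_spec G a G'.
Proof.
  induction 1; simpl.
  - split; auto. exists S', Sk, sg, bs, Tk.
    assert (W := ewf G q _ H1). simpl in W.
    assert (Hs : forall r, r <> p -> r <> q -> same G G' r).
    { intros r Hr1 Hr2. unfold same, Q, Ty. rewrite (H6 r Hr1 Hr2). split; constructor. }
    unfold Q, Ty. rewrite H0, H1, H4, H5. simpl.
    splits; try apply qeq_refl; try apply teq_refl; auto.
  - assert (W := ewf G p _ H). simpl in W.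
    assert (Hs : forall r, r <> p -> same G G' r).
    { intros r Hr. unfold same, Q, Ty. rewrite (H2 r Hr). split; constructor. }
    exists bs, Sk, Tk. unfold Q, Ty. rewrite H, H1. simpl.
    splits; try apply qeq_refl; try apply teq_refl; auto.
  - apply env_eq_envr in H. apply env_eq_envr in H1.
    destruct a as [q p l|p q l]; simpl in IHred.
    + destruct IHred as [Hpq [S' [Sk [sg [bs [Tk [h1 [h2 [h3 [h4 [h5 [h6 [h7 [h8 [h9 h10]]]]]]]]]]]]]]].
      split; auto. exists S', Sk, sg, bs, Tk.
      destruct (H p) as [Hp1 Hp2]. destruct (H q) as [Hq1 Hq2].
      destruct (H1 p) as [Hp1' Hp2']. destruct (H1 q) as [Hq1' Hq2'].
      splits; auto.
      * exact (qeq_trans _ _ _ Hp1 h1).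
      * exact (teq_trans _ _ _ Hq2 h2).
      * exact (qeq_trans _ _ _ (qeq_sym _ _ Hp1') h6).
      * exact (teq_trans _ _ _ (teq_sym _ _ Hp2') (teq_trans _ _ _ h7 (teq_sym _ _ Hp2))).
      * exact (qeq_trans _ _ _ (qeq_sym _ _ Hq1') (qeq_trans _ _ _ h8 (qeq_sym _ _ Hq1))).
      * exact (teq_trans _ _ _ (teq_sym _ _ Hq2') h9).
      * intros r Hr1 Hr2. destruct (h10 r Hr1 Hr2) as [a1 a2].
        destruct (H r) as [b1 b2]. destruct (H1 r) as [c1 c2]. split.
        -- exact (qeq_trans _ _ _ (qeq_sym _ _ c1) (qeq_trans _ _ _ a1 (qeq_sym _ _ b1))).
        -- exact (teq_trans _ _ _ (teq_sym _ _ c2) (teq_trans _ _ _ a2 (teq_sym _ _ b2))).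
    + destruct IHred as [bs [Sk [Tk [h1 [h2 [h3 [h4 [h5 h6]]]]]]]].
      exists bs, Sk, Tk.
      destruct (H p) as [Hp1 Hp2]. destruct (H1 p) as [Hp1' Hp2'].
      splits; auto.
      * exact (teq_trans _ _ _ Hp2 h1).
      * exact (qeq_trans _ _ _ (qeq_sym _ _ Hp1') (qeq_trans _ _ _ h4 (qeq_app _ _ _ (qeq_sym _ _ Hp1)))).
      * exact (teq_trans _ _ _ (teq_sym _ _ Hp2') h5).
      * intros r Hr. destruct (h6 r Hr) as [a1 a2].
        destruct (H r) as [b1 b2]. destruct (H1 r) as [c1 c2]. split.
        -- exact (qeq_trans _ _ _ (qeq_sym _ _ c1) (qeq_trans _ _ _ a1 (qeq_sym _ _ b1))).
        -- exact (teq_trans _ _ _ (teq_sym _ _ c2) (teq_trans _ _ _ a2 (teq_sym _ _ b2))).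
Qed.

Lemma Q_upd_same G p e H : Q (upd G p e H) p = fst e.
Proof. unfold Q. rewrite upd_same. auto. Qed.
Lemma Ty_upd_same G p e H : Ty (upd G p e H) p = snd e.
Proof. unfold Ty. rewrite upd_same. auto. Qed.
Lemma Q_upd_other G p e H r : r <> p -> Q (upd G p e H) r = Q G r.
Proof. intros. unfold Q. rewrite upd_other; auto. Qed.
Lemma Ty_upd_other G p e H r : r <> p -> Ty (upd G p e H) r = Ty G r.
Proof. intros. unfold Ty. rewrite upd_other; auto. Qed.

Lemma mk_send G p q l bs Sk Tk :
  teq (Ty G p) (TSel q bs) -> wf_type (TSel q bs) -> In (l, Sk, Tk) bs ->
  exists H, red G (LSnd p q l) H.
Proof.
  intros Ht Hw Hin.
  set (G1 := upd G p (Q G p, TSel q bs) Hw).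
  set (H := upd G p (Q G p ++ [(q, l, Sk)], Tk) (wf_branch_sel _ _ _ _ _ Hw Hin)).
  exists H. apply (red_struct G G1 H H).
  - apply envr_env_eq. intros r. destruct (Nat.eq_dec r p).
    + subst. unfold G1. rewrite Q_upd_same, Ty_upd_same. simpl. split; [apply qeq_refl|auto].
    + unfold G1. rewrite Q_upd_other, Ty_upd_other; auto. split; [apply qeq_refl|apply teq_refl].
  - apply (red_send G1 H p q l Sk (Q G p) Tk bs).
    + apply upd_same.
    + auto.
    + apply upd_same.
    + intros r Hr. unfold G1, H. rewrite !upd_other; auto.
  - apply envr_env_eq, envr_refl.
Qed.

Lemma mk_rcv G p q l S' Sk sg bs Tk :
  p <> q -> qeq (Q G p) ((q, l, S') :: sg) -> teq (Ty G q) (TBra p bs) ->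
  wf_type (TBra p bs) -> In (l, Sk, Tk) bs -> subsort S' Sk ->
  exists H, red G (LRcv q p l) H.
Proof.
  intros Hpq Hq Ht Hw Hin Hs.
  set (G1 := upd (upd G p ((q, l, S') :: sg, Ty G p) (wf_Ty G p)) q (Q G q, TBra p bs) Hw).
  set (H := upd (upd G p (sg, Ty G p) (wf_Ty G p)) q (Q G q, Tk) (wf_branch_bra _ _ _ _ _ Hw Hin)).
  exists H. apply (red_struct G G1 H H).
  - apply envr_env_eq. intros r.
    destruct (Nat.eq_dec r q); [|destruct (Nat.eq_dec r p)].
    + subst. unfold G1. rewrite Q_upd_same, Ty_upd_same. simpl. split; [apply qeq_refl|auto].
    + subst. unfold G1. rewrite Q_upd_other, Ty_upd_other, Q_upd_same, Ty_upd_same; auto. simpl.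
      split; [exact Hq|apply teq_refl].
    + unfold G1. rewrite !Q_upd_other, !Ty_upd_other; auto. split; [apply qeq_refl|apply teq_refl].
  - apply (red_rcv G1 H p q l S' Sk sg (Q G q) (Ty G p) Tk bs); auto.
    + unfold G1. rewrite upd_other, upd_same; auto.
    + unfold G1. apply upd_same.
    + unfold H. rewrite upd_other, upd_same; auto.
    + unfold H. apply upd_same.
    + intros r Hr1 Hr2. unfold G1, H. rewrite !upd_other; auto.
  - apply envr_env_eq, envr_refl.
Qed.

Lemma sel_bra q bs p bs' : ~ teq (TSel q bs) (TBra p bs').
Proof. intros E. pose proof (teq_hd _ _ E (fun _ => HBot)). discriminate. Qed.
Lemma sel_sel q bs p bs' : teq (TSel q bs) (TSel p bs') -> q = p.
Proof. intros E. pose proof (teq_hd _ _ E (fun _ => HBot)). simpl in H. congruence. Qed.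
Lemma bra_bra q bs p bs' : teq (TBra q bs) (TBra p bs') -> q = p.
Proof. intros E. pose proof (teq_hd _ _ E (fun _ => HBot)). simpl in H. congruence. Qed.

Lemma send_persist G H G' a p q l :
  red G (LSnd p q l) H -> red G a G' -> (forall l', a <> LSnd p q l') ->
  exists H', red G' (LSnd p q l) H'.
Proof.
  intros R1 R2 Ha.
  apply red_inv in R1. destruct R1 as [bs [Sk [Tk [h1 [h2 [h3 _]]]]]].
  assert (Hty : teq (Ty G' p) (Ty G p)).
  { apply red_inv in R2. destruct a as [q' p' l'|p' q' l']; simpl in R2.
    - destruct R2 as [Hne [S' [Sk' [sg [bs' [Tk' [g1 [g2 [g3 [g4 [g5 [g6 [g7 [g8 [g9 g10]]]]]]]]]]]]]]].
      destruct (Nat.eq_dec p q').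
      + subst. exfalso. apply (sel_bra q bs p' bs').
        eapply teq_trans; [apply teq_sym; eauto|]; auto.
      + destruct (Nat.eq_dec p p'); [subst; auto|]. apply g10; auto.
    - destruct R2 as [bs' [Sk' [Tk' [g1 [g2 [g3 [g4 [g5 g6]]]]]]]].
      destruct (Nat.eq_dec p p').
      + subst. assert (q = q').
        { apply (sel_sel q bs q' bs'). eapply teq_trans; [apply teq_sym; eauto|]; auto. }
        subst. exfalso. apply (Ha l'); auto.
      + apply g6; auto. }
  eapply mk_send; eauto. eapply teq_trans; eauto.
Qed.

Lemma rcv_persist G H G' a q p l :
  red G (LRcv q p l) H -> red G a G' -> a <> LRcv q p l ->
  exists H', red G' (LRcv q p l) H'.
Proof.
  intros R1 R2 Ha.
  apply red_inv in R1.
  destruct R1 as [Hpq [S' [Sk [sg [bs [Tk [h1 [h2 [h3 [h4 [h5 _]]]]]]]]]]].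
  assert (Hf : filt q (Q G p) = (q, l, S') :: filt q sg).
  { rewrite (qeq_filt _ _ h1). unfold filt; simpl. rewrite Nat.eqb_refl. auto. }
  assert (K : teq (Ty G' q) (Ty G q) /\ exists t, filt q (Q G' p) = filt q (Q G p) ++ t).
  { apply red_inv in R2. destruct a as [q' p' l'|p' q' l']; simpl in R2.
    - destruct R2 as [Hne [S2 [Sk' [sg' [bs' [Tk' [g1 [g2 [g3 [g4 [g5 [g6 [g7 [g8 [g9 g10]]]]]]]]]]]]]]].
      destruct (Nat.eq_dec q q').
      + subst q'. assert (p = p').
        { apply (bra_bra p bs p' bs'). eapply teq_trans; [apply teq_sym; eauto|]; auto. }
        subst p'. exfalso.
        pose proof (qeq_filt _ _ g1 q) as F. rewrite Hf in F.
        unfold filt in F; simpl in F. rewrite Nat.eqb_refl in F. injection F; intros; subst.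
        apply Ha; auto.
      + split.
        * destruct (Nat.eq_dec q p'); [subst; auto|]. apply g10; auto.
        * exists []. rewrite app_nil_r.
          destruct (Nat.eq_dec p p').
          -- subst p'. rewrite (qeq_filt _ _ g6), (qeq_filt _ _ g1).
             unfold filt; simpl. destruct (Nat.eqb_spec q' q); congruence.
          -- destruct (Nat.eq_dec p q').
             ++ subst. apply qeq_filt; auto.
             ++ apply qeq_filt. apply g10; auto.
    - destruct R2 as [bs' [Sk' [Tk' [g1 [g2 [g3 [g4 [g5 g6]]]]]]]].
      destruct (Nat.eq_dec q p').
      + subst. exfalso. apply (sel_bra q' bs' p bs).
        eapply teq_trans; [apply teq_sym; eauto|]; auto.
      + split; [apply g6; auto|].
        destruct (Nat.eq_dec p p').
        * subst. exists (filt q [(q', l', Sk')]).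
          rewrite (qeq_filt _ _ g4). unfold filt. apply filter_app.
        * exists []. rewrite app_nil_r. apply qeq_filt. apply g6; auto. }
  destruct K as [K1 [t Kt]].
  rewrite Hf in Kt. simpl in Kt.
  destruct (front _ _ _ _ _ Kt) as [sg2 Hsg2].
  eapply mk_rcv; eauto. eapply teq_trans; eauto.
Qed.

Definition prep (G : env) (g : nat -> env) (n : nat) : env :=
  match n with 0 => G | S n => g n end.

Lemma inI_S len i : inI (option_map S len) (S i) <-> inI len i.
Proof. destruct len; simpl; lia. Qed.

Lemma env_eq_pw G H : (forall p, efun G p = efun H p) -> env_eq G H.
Proof.
  intros E. apply envr_env_eq. intros p. unfold Q, Ty. rewrite E. split; constructor.
Qed.

Theorem proposition4p6 (G G' : env) :
  live G -> step G G' -> live G'.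
Proof.
  intros Hlive [a Hstep] g' len' H0 Hg0 Hpath Hfair.
  assert (Hred0 : red G a (g' 0)).
  { apply (red_struct G G G' (g' 0) a); auto.
    - apply envr_env_eq, envr_refl.
    - apply env_eq_pw. intros p; rewrite Hg0; auto. }
  assert (E0 : env_eq (g' 0) G') by (apply env_eq_pw; auto).
  assert (Hl : live_path (prep G g') (option_map S len')).
  { apply Hlive.
    - destruct len'; simpl; auto; lia.
    - intros; reflexivity.
    - intros [|i] Hi.
      + exists a; exact Hred0.
      + apply (proj1 (inI_S len' _)) in Hi. apply Hpath; auto.
    - intros [|i] Hi.
      + split.
        * intros p q l H1 R.
          destruct a as [x y l0|p0 q0 l0].
          -- destruct (send_persist _ _ _ _ _ _ _ R Hstep) as [H' R'].
             { intros l'; discriminate. }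
             destruct (proj1 (Hfair 0 H0) p q l H') as [k [l' [k1 [k2 k3]]]].
             { apply (red_struct _ G' H' H'); auto. apply envr_env_eq, envr_refl. }
             exists (S k), l'. simpl. splits; auto; try lia. apply (proj2 (inI_S len' _)); auto.
          -- destruct (Nat.eq_dec p0 p), (Nat.eq_dec q0 q); subst.
             ++ exists 0, l0. simpl. splits; auto. apply (proj2 (inI_S len' _)); auto.
             ++ destruct (send_persist _ _ _ _ _ _ _ R Hstep) as [H' R'].
                { intros l' E; injection E; intros; subst; congruence. }
                destruct (proj1 (Hfair 0 H0) p q l H') as [k [l' [k1 [k2 k3]]]].
                { apply (red_struct _ G' H' H'); auto. apply envr_env_eq, envr_refl. }
                exists (S k), l'. simpl. splits; auto; try lia. apply (proj2 (inI_S len' _)); auto.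
             ++ destruct (send_persist _ _ _ _ _ _ _ R Hstep) as [H' R'].
                { intros l' E; injection E; intros; subst; congruence. }
                destruct (proj1 (Hfair 0 H0) p q l H') as [k [l' [k1 [k2 k3]]]].
                { apply (red_struct _ G' H' H'); auto. apply envr_env_eq, envr_refl. }
                exists (S k), l'. simpl. splits; auto; try lia. apply (proj2 (inI_S len' _)); auto.
             ++ destruct (send_persist _ _ _ _ _ _ _ R Hstep) as [H' R'].
                { intros l' E; injection E; intros; subst; congruence. }
                destruct (proj1 (Hfair 0 H0) p q l H') as [k [l' [k1 [k2 k3]]]].
                { apply (red_struct _ G' H' H'); auto. apply envr_env_eq, envr_refl. }
                exists (S k), l'. simpl. splits; auto; try lia. apply (proj2 (inI_S len' _)); auto.
        * intros p q l H1 R.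
          assert (D : a = LRcv p q l \/ a <> LRcv p q l).
          { destruct a as [x y z|x y z]; [|right; discriminate].
            destruct (Nat.eq_dec x p), (Nat.eq_dec y q), (Nat.eq_dec z l); subst; auto;
            right; intros E; injection E; intros; congruence. }
          destruct D as [D|D].
          -- subst. exists 0. simpl. splits; auto. apply (proj2 (inI_S len' _)); auto.
          -- destruct (rcv_persist _ _ _ _ _ _ _ R Hstep D) as [H' R'].
             destruct (proj2 (Hfair 0 H0) p q l H') as [k [k1 [k2 k3]]].
             { apply (red_struct _ G' H' H'); auto. apply envr_env_eq, envr_refl. }
             exists (S k). simpl. splits; auto; try lia. apply (proj2 (inI_S len' _)); auto.
      + apply (proj1 (inI_S len' _)) in Hi. destruct (Hfair i Hi) as [F1 F2]. split.
        * intros p q l H1 R. destruct (F1 p q l H1 R) as [k [l' [k1 [k2 k3]]]].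
          exists (S k), l'. simpl. splits; auto; try lia. apply (proj2 (inI_S len' _)); auto.
        * intros p q l H1 R. destruct (F2 p q l H1 R) as [k [k1 [k2 k3]]].
          exists (S k). simpl. splits; auto; try lia. apply (proj2 (inI_S len' _)); auto. }
  intros i Hi. destruct (Hl (S i) (proj2 (inI_S _ _) Hi)) as [L1 L2]. split.
  - intros p q l s sg T e He Ee. destruct (L1 p q l s sg T e He Ee) as [k [k1 [k2 k3]]].
    destruct k; [lia|]. exists k. splits; auto; try lia. apply (proj1 (inI_S len' _)); auto.
  - intros p q sg bs e He Ee. destruct (L2 p q sg bs e He Ee) as [k [l' [k1 [k2 k3]]]].
    destruct k; [lia|]. exists k, l'. splits; auto; try lia. apply (proj1 (inI_S len' _)); auto.
Qed.
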